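(* Let $C$ be an arbitrary array of $N$ distinct $n$-bit integers. Then $\mathrm{wkt}_C(\vec e_{\mathsf a})=O(N^2\log N)$ (with an absolute constant, independent of $n$ and $C$).
   Context: Bits are indexed $1$ (least significant) to $n$ (most significant). For an energy vector $\vec e=(e_1,\dots,e_n)$, an inexact comparison of $u,v$ reads each bit $j$ of $u$ and of $v$ independently, flipped with probability $2^{-e_j}$, and orders $u,v$ by the read values; comparisons use fresh independent randomness. The array is sorted by randomized quicksort (pivot chosen uniformly at random from the current subarray, partition by inexact comparisons with the pivot, recursion). $Q(u,v,\vec e)$ is the event that in the output $u,v$ are in the wrong relative order; $\mathrm{wkt}_C(\vec e)=\sum_{1\le a<b\le N}|C[a]-C[b]|\cdot\Pr[Q(C[a],C[b],\vec e)]$ (probability over pivots and comparison errors). $\vec e_{\mathsf a}=(1,2,\dots,n)$. *)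

(* Defs.v *)
From Stdlib Require Export Reals.
From mathcomp Require Export all_boot.

Set Implicit Arguments.
Unset Strict Implicit.
Unset Printing Implicit Defensive.

Definition dist (A : Type) := seq (R * A).

Definition dret {A : Type} (a : A) : dist A := [:: (R1, a)].

Definition dbind {A B : Type} (d : dist A) (f : A -> dist B) : dist B :=
  flatten [seq [seq (Rmult pa.1 qb.1, qb.2) | qb <- f pa.2] | pa <- d].

Definition dunif {A : Type} (s : seq A) : dist A :=
  [seq (Rinv (INR (size s)), a) | a <- s].

Definition rsum (s : seq R) : R := foldr Rplus R0 s.

Definition dprob {A : Type} (d : dist A) (P : A -> bool) : R :=
  rsum [seq (if P pa.2 then pa.1 else R0) | pa <- d].

Definition flip_bit (p : R) (b : bool) : dist bool :=
  [:: (p, ~~ b); (Rminus R1 p, b)].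

(* es = (e_{j+1}, ..., e_n); reads bits j+1..n (weights 2^j, ..., 2^(n-1))
   of x, bit number k flipped with probability 2^(-e_k), independently. *)
Fixpoint read_aux (es : seq nat) (j : nat) (x : nat) : dist nat :=
  match es with
  | [::] => dret 0%N
  | ej :: es' =>
      dbind (flip_bit (Rinv (pow 2 ej)) (odd (x %/ expn 2 j)))
        (fun b => dbind (read_aux es' j.+1 x)
           (fun r => dret ((nat_of_bool b) * expn 2 j + r)%N))
  end.

(* energy vector e = (e_1, ..., e_n), e_1 for the least significant bit *)
Definition read_val (e : seq nat) (x : nat) : dist nat := read_aux e 0 x.

(* inexact comparison "x < p", fresh randomness for both reads.
   Ties of the read values are read as "not less" (x goes right). *)
Definition inexact_lt (e : seq nat) (x p : nat) : dist bool :=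
  dbind (read_val e x) (fun rx =>
  dbind (read_val e p) (fun rp => dret (rx < rp)%N)).

Fixpoint partition_dist (e : seq nat) (p : nat) (s : seq nat)
  : dist (seq nat * seq nat) :=
  match s with
  | [::] => dret ([::], [::])
  | x :: s' =>
      dbind (inexact_lt e x p) (fun lt =>
      dbind (partition_dist e p s') (fun lr =>
        dret (if lt then (x :: lr.1, lr.2) else (lr.1, x :: lr.2))))
  end.

(* randomized quicksort with fuel (size s suffices) *)
Fixpoint qs_fuel (e : seq nat) (k : nat) (s : seq nat) : dist (seq nat) :=
  match k with
  | 0 => dret s
  | k'.+1 =>
      if s is [::] then dret [::] else
      dbind (dunif (iota 0 (size s))) (fun i =>
        let p := nth 0%N s i in
        let rest := take i s ++ drop i.+1 s in
        dbind (partition_dist e p rest) (fun lr =>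
        dbind (qs_fuel e k' lr.1) (fun l =>
        dbind (qs_fuel e k' lr.2) (fun r =>
          dret (l ++ p :: r)))))
  end.

Definition quicksort (e : seq nat) (s : seq nat) : dist (seq nat) :=
  qs_fuel e (size s) s.

Definition wrong_order (u v : nat) (out : seq nat) : bool :=
  if (u < v)%N then (index v out < index u out)%N
  else (index u out < index v out)%N.

Definition wkt (C : seq nat) (e : seq nat) : R :=
  let N := size C in
  let d := quicksort e C in
  rsum [seq Rmult (Rabs (Rminus (INR (nth 0%N C ab.1)) (INR (nth 0%N C ab.2))))
             (dprob d (wrong_order (nth 0%N C ab.1) (nth 0%N C ab.2)))
       | ab <- [seq ab <- [seq (a, b) | a <- iota 0 N, b <- iota 0 N]
                | (ab.1 < ab.2)%N]].

Definition e_a (n : nat) : seq nat := iota 1 n.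

(* Main.v *)
Require Import Defs.
From HB Require Import structures.
From Stdlib Require Import Reals Lra Lia.
From mathcomp Require Import all_boot zify.
Require Import Defs.
Set Implicit Arguments.
Unset Strict Implicit.
Unset Printing Implicit Defensive.
Open Scope R_scope.
Arguments rsum : simpl never.
Import List (Forall, Forall_app, Forall_impl, Forall_nil, Forall_cons).

Lemma rsum_cat (s1 s2 : seq R) : rsum (s1 ++ s2) = rsum s1 + rsum s2.
Proof. elim: s1 => [|a s IH] /=; rewrite /rsum /=; [lra|]. rewrite -/(rsum _) in IH *. rewrite -/(rsum (s++s2)) IH /rsum; lra. Qed.

Lemma rsum_cons a s : rsum (a :: s) = a + rsum s.
Proof. by []. Qed.

Lemma rsum_nil : rsum [::] = 0.
Proof. by []. Qed.

Definition Ex {A} (d : dist A) (f : A -> R) : R := rsum [seq pa.1 * f pa.2 | pa <- d].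

Definition ok {A} (d : dist A) (P : A -> Prop) : Prop :=
  Forall (fun pa : R * A => 0 <= pa.1 /\ P pa.2) d.

Definition mass {A} (d : dist A) := Ex d (fun _ => 1).

Lemma Ex_nil A f : Ex (A:=A) [::] f = 0. Proof. by []. Qed.
Lemma Ex_cons A (w : R) (a : A) d f : Ex ((w, a) :: d) f = w * f a + Ex d f.
Proof. by []. Qed.

Lemma Ex_ret A (a : A) f : Ex (dret a) f = f a.
Proof. rewrite /Ex /dret /= /rsum /=; lra. Qed.

Lemma Ex_map_scale (B : Type) (w : R) (l : dist B) (f : B -> R) :
  rsum [seq pa.1 * f pa.2 | pa <- [seq (w * qb.1, qb.2) | qb <- l]] = w * Ex l f.
Proof.
elim: l => [|[x b] l IH] /=; first by rewrite /Ex /rsum /=; lra.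
rewrite rsum_cons IH /Ex /= rsum_cons; lra.
Qed.

Lemma Ex_bind A B (d : dist A) (g : A -> dist B) f :
  Ex (dbind d g) f = Ex d (fun a => Ex (g a) f).
Proof.
elim: d => [|[w a] d IH] //=.
rewrite /dbind /= -/(dbind d g) {1}/Ex map_cat rsum_cat -/(Ex (dbind d g) f) IH Ex_cons /=.
by rewrite Ex_map_scale.
Qed.

Lemma Ex_add A (d : dist A) f g : Ex d (fun a => f a + g a) = Ex d f + Ex d g.
Proof. elim: d => [|[w a] d IH]; rewrite ?Ex_cons ?IH /Ex /rsum /=; lra. Qed.

Lemma Ex_scale A (d : dist A) c f : Ex d (fun a => c * f a) = c * Ex d f.
Proof. elim: d => [|[w a] d IH]; rewrite ?Ex_cons ?IH /Ex /rsum /=; lra. Qed.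

Lemma Ex_const A (d : dist A) c : Ex d (fun _ => c) = c * mass d.
Proof. rewrite /mass -Ex_scale; elim: d => [|[w a] d IH]; rewrite ?Ex_cons ?IH /Ex /rsum /=; lra. Qed.

Lemma Ex_le A (d : dist A) P f g : ok d P -> (forall a, P a -> f a <= g a) -> Ex d f <= Ex d g.
Proof.
move=> H Hfg; elim: d H => [|[w a] d IH] H; first by rewrite /Ex /rsum /=; lra.
inversion H as [|? ? [Hw Ha] Hd]; subst.
rewrite !Ex_cons; have := IH Hd; have := Hfg a Ha; simpl in Hw; nra.
Qed.

Lemma Ex_ext A (d : dist A) P f g : ok d P -> (forall a, P a -> f a = g a) -> Ex d f = Ex d g.
Proof.
move=> H Hfg; apply: Rle_antisym; apply: (Ex_le H) => a Ha; rewrite Hfg //; lra.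
Qed.

Lemma ok_weaken A (d : dist A) P Q : ok d P -> (forall a, P a -> Q a) -> ok d Q.
Proof. move=> H HPQ; apply: Forall_impl H => pa [? ?]; split; auto. Qed.

Lemma ok_ret A (a : A) (P : A -> Prop) : P a -> ok (dret a) P.
Proof. move=> Ha; constructor; last constructor; simpl; split; [lra|done]. Qed.

Lemma ok_bind A B (d : dist A) (g : A -> dist B) P Q :
  ok d P -> (forall a, P a -> ok (g a) Q) -> ok (dbind d g) Q.
Proof.
move=> H Hg; elim: d H => [|[w a] d IH] H; first by constructor.
inversion H as [|? ? [Hw Ha] Hd]; subst.
rewrite /dbind /= -/(dbind d g); apply Forall_app; split; last exact: IH.
have := Hg a Ha; elim: (g a) => [|[w' b] l IHl] Hl /=; first by constructor.
inversion Hl as [|? ? [Hw' Hb] Hl']; subst.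
constructor; last exact: IHl. simpl in *; split; [nra|done].
Qed.

Lemma mass_ret A (a : A) : mass (dret a) = 1.
Proof. exact: Ex_ret. Qed.

Lemma mass_bind A B (d : dist A) (g : A -> dist B) P :
  ok d P -> mass d = 1 -> (forall a, P a -> mass (g a) = 1) -> mass (dbind d g) = 1.
Proof.
move=> H Hm Hg; rewrite /mass Ex_bind; rewrite /mass in Hm; rewrite -{2}Hm.
apply: (Ex_ext H) => a Ha; exact: Hg.
Qed.

Lemma Ex_ge0 A (d : dist A) P f : ok d P -> (forall a, P a -> 0 <= f a) -> 0 <= Ex d f.
Proof.
move=> H Hf; have -> : 0 = Ex d (fun _ => 0) by rewrite Ex_const; lra.
exact: Ex_le H Hf.
Qed.

Lemma Ex_le_const A (d : dist A) P f c : ok d P -> mass d = 1 -> (forall a, P a -> f a <= c) -> Ex d f <= c.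
Proof.
move=> H Hm Hf; have -> : c = Ex d (fun _ => c) by rewrite Ex_const Hm; lra.
exact: Ex_le H Hf.
Qed.

Lemma dprob_Ex A (d : dist A) P : dprob d P = Ex d (fun a => if P a then 1 else 0).
Proof.
elim: d => [|[w a] d IH] //. rewrite Ex_cons /dprob /= rsum_cons -/(dprob d P) IH.
case: (P a); lra.
Qed.

Fixpoint Tv (j m x : nat) : nat :=
  match m with 0 => 0%N | m'.+1 => (odd (x %/ 2^j) * 2^j + Tv j.+1 m' x)%N end.

Lemma mod_step (x j : nat) : (x %% 2^j.+1 = x %% 2^j + odd (x %/ 2^j) * 2^j)%N.
Proof.
rewrite expnSr mulnC -modn2 modn_divl.
set y := (x %% (2 * 2^j))%N.
have Hy : (y %% 2^j = x %% 2^j)%N by rewrite /y modn_dvdm // dvdn_mull.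
rewrite -Hy addnC -divn_eq //.
Qed.

Lemma Tv_mod m j x : (Tv j m x + x %% 2^j = x %% 2^(j+m))%N.
Proof.
elim: m j => [|m IH] j /=; first by rewrite addn0.
have := IH j.+1; have := mod_step x j; rewrite addSnnS. lia.
Qed.

Lemma Tv0 n x : (x < 2^n)%N -> Tv 0 n x = x.
Proof. move=> H; have := Tv_mod n 0 x; rewrite modn1 addn0 add0n modn_small //. Qed.

Definition distn (a b : nat) : nat := (a - b) + (b - a).

Lemma ind_le (b1 b2 : bool) : (b1 -> b2) -> (if b1 then 1 else 0) <= (if b2 then 1 else 0).
Proof. case: b1; case: b2 => // H; try lra. by have := H isT. Qed.

Lemma ind_le1 (b : bool) : (if b then 1 else 0) <= 1.
Proof. case: b; lra. Qed.

Lemma ind_ge0 (b : bool) : 0 <= (if b then 1 else 0).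
Proof. case: b; lra. Qed.

Lemma pow2_pos k : 0 < pow 2 k.
Proof. apply: pow_lt; lra. Qed.

Lemma flip_ok p b : 0 <= p <= 1 -> ok (flip_bit p b) (fun _ => True).
Proof. move=> Hp; constructor; [simpl; split; [lra|done] | constructor; [simpl; split;[lra|done]| constructor]]. Qed.

Lemma flip_mass p b : mass (flip_bit p b) = 1.
Proof. rewrite /mass /flip_bit !Ex_cons Ex_nil; lra. Qed.

Lemma invpow_01 e : 0 <= / pow 2 e <= 1.
Proof.
have H := pow2_pos e; split; first by apply: Rlt_le; apply: Rinv_0_lt_compat.
have : 1 <= pow 2 e by apply: pow_R1_Rle; lra.
move=> H1; rewrite -Rinv_1; apply: Rinv_le_contravar; lra.
Qed.

Lemma read_ok es j x : ok (read_aux es j x) (fun _ => True) /\ mass (read_aux es j x) = 1.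
Proof.
elim: es j => [|e es IH] j /=; first by split; [apply: ok_ret|apply: mass_ret].
split.
- apply: ok_bind; first exact: (flip_ok _ (invpow_01 e)).
  move=> b _; apply: ok_bind; first exact: (proj1 (IH j.+1)).
  move=> r _; exact: ok_ret.
- apply: mass_bind; [exact: (flip_ok _ (invpow_01 e))|exact: flip_mass|].
  move=> b _; apply: mass_bind; [exact: (proj1 (IH j.+1))|exact: (proj2 (IH j.+1))|].
  move=> r _; exact: mass_ret.
Qed.

Lemma read_tail_gen m j x k :
  Ex (read_aux (iota j.+1 m) j x)
     (fun r => if (2^k - 2^(minn j k) < distn r (Tv j m x))%N then 1 else 0)
  <= / pow 2 (maxn j k).
Proof.
elim: m j => [|m IH] j.
  rewrite /= Ex_ret /distn /=.
  by have [] := invpow_01 (maxn j k).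
have [Hok Hm] := read_ok (iota j.+2 m) j.+1 x.
rewrite [iota _ _]/= [read_aux _ _ _]/= [Tv _ _ _]/= Ex_bind /flip_bit !Ex_cons Ex_nil.
rewrite !Ex_bind.
change (2 * pow 2 j) with (pow 2 j.+1).
set a := odd (x %/ 2^j).
set T' := Tv j.+1 m x.
have HA : (0 < 2^j)%N by rewrite expn_gt0.
have Hp := invpow_01 j.+1.
case: (leqP k j) => Hkj.
- have Hmin : minn j k = k by apply/minn_idPr.
  have Hmin' : minn j.+1 k = k by apply/minn_idPr; lia.
  have Hmax : maxn j k = j by apply/maxn_idPl.
  have Hmax' : maxn j.+1 k = j.+1 by apply/maxn_idPl; lia.
  have IH' := IH j.+1; rewrite Hmin' Hmax' in IH'.
  try rewrite Hmin Hmax.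
  have E1 : Ex (read_aux (iota j.+2 m) j.+1 x)
     (fun a0 => Ex (dret (~~ a * 2 ^ j + a0)%N)
        (fun r => if (2 ^ k - 2 ^ k < distn r (a * 2 ^ j + T'))%N then 1 else 0)) <= 1.
    apply: (Ex_le_const Hok Hm) => r _; rewrite Ex_ret; exact: ind_le1.
  have E2 : Ex (read_aux (iota j.+2 m) j.+1 x)
     (fun a0 => Ex (dret (a * 2 ^ j + a0)%N)
        (fun r => if (2 ^ k - 2 ^ k < distn r (a * 2 ^ j + T'))%N then 1 else 0)) <= / pow 2 j.+1.
    apply: Rle_trans IH'; apply: (Ex_le Hok) => r _; rewrite Ex_ret; apply: ind_le.
    rewrite /distn; lia.
  have E3 : / pow 2 j.+1 + / pow 2 j.+1 = / pow 2 j.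
    rewrite /= Rinv_mult; lra.
  have E0 : 0 <= Ex (read_aux (iota j.+2 m) j.+1 x)
     (fun a0 => Ex (dret (a * 2 ^ j + a0)%N)
        (fun r => if (2 ^ k - 2 ^ k < distn r (a * 2 ^ j + T'))%N then 1 else 0)).
    apply: (Ex_ge0 Hok) => r _; rewrite Ex_ret; exact: ind_ge0.
  rewrite -E3. nra.
- have Hmin : minn j k = j by apply/minn_idPl; lia.
  have Hmin' : minn j.+1 k = j.+1 by apply/minn_idPl; lia.
  have Hmax : maxn j k = k by apply/maxn_idPr; lia.
  have Hmax' : maxn j.+1 k = k by apply/maxn_idPr; lia.
  have IH' := IH j.+1; rewrite Hmin' Hmax' in IH'.
  try rewrite Hmin Hmax.
  have HB : (2^j.+1 <= 2^k)%N by rewrite leq_exp2l.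
  rewrite expnS in HB.
  have E : forall b : bool, Ex (read_aux (iota j.+2 m) j.+1 x)
     (fun a0 => Ex (dret (b * 2 ^ j + a0)%N)
        (fun r => if (2 ^ k - 2 ^ j < distn r (a * 2 ^ j + T'))%N then 1 else 0)) <= / pow 2 k.
    move=> b; apply: Rle_trans IH'; apply: (Ex_le Hok) => r _; rewrite Ex_ret; apply: ind_le.
    rewrite expnS /distn.
    case: (b); case: (a); rewrite ?mul1n ?mul0n; lia.
  have := E (~~ a); have := E a; nra.
Qed.

Lemma read_tail n x k : (x < 2^n)%N ->
  Ex (read_val (e_a n) x) (fun r => if (2^k <= distn r x)%N then 1 else 0) <= / pow 2 k.
Proof.
move=> Hx; have := read_tail_gen n 0 x k.
rewrite Tv0 // min0n max0n expn0 => H; apply: Rle_trans H.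
have [Hok _] := read_ok (iota 1 n) 0 x.
apply: (Ex_le Hok) => r _; apply: ind_le.
have : (0 < 2^k)%N by rewrite expn_gt0. lia.
Qed.

Lemma INR_expn2 k : INR (2^k)%N = pow 2 k.
Proof. elim: k => [|k IH] //. rewrite expnS -multE mult_INR IH /=. lra. Qed.

Lemma INR_addn a b : INR (a + b)%N = INR a + INR b.
Proof. by rewrite -plusE plus_INR. Qed.

Lemma INR_muln a b : INR (a * b)%N = INR a * INR b.
Proof. by rewrite -multE mult_INR. Qed.

Definition mis (x p : nat) (lt : bool) : bool := if lt then (p <= x)%N else (x < p)%N.

Lemma inexact_ok e x p : ok (inexact_lt e x p) (fun _ => True) /\ mass (inexact_lt e x p) = 1.
Proof.
have [Hx Hmx] := read_ok e 0 x; have [Hp Hmp] := read_ok e 0 p.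
split.
- apply: ok_bind Hx _ => rx _; apply: ok_bind Hp _ => rp _; exact: ok_ret.
- apply: mass_bind Hx Hmx _ => rx _; apply: mass_bind Hp Hmp _ => rp _; exact: mass_ret.
Qed.

Lemma mis_le1 e x p : Ex (inexact_lt e x p) (fun lt => if mis x p lt then 1 else 0) <= 1.
Proof. have [H Hm] := inexact_ok e x p; apply: (Ex_le_const H Hm) => lt _; exact: ind_le1. Qed.

Lemma mis_ge0 e x p : 0 <= Ex (inexact_lt e x p) (fun lt => if mis x p lt then 1 else 0).
Proof. have [H Hm] := inexact_ok e x p; apply: (Ex_ge0 H) => lt _; exact: ind_ge0. Qed.

Lemma mis_bound n x p : (x < 2^n)%N -> (p < 2^n)%N -> x <> p ->
  INR (distn x p) * Ex (inexact_lt (e_a n) x p) (fun lt => if mis x p lt then 1 else 0) <= 8.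
Proof.
move=> Hx Hp Hxp.
have HD : (0 < distn x p)%N by rewrite /distn; lia.
have H1 := trunc_logP (isT : (1 < 2)%N) HD.
have H2 := trunc_log_ltn (distn x p) (isT : (1 < 2)%N).
have Hge := mis_ge0 (e_a n) x p.
case Et: (trunc_log 2 (distn x p)) => [|k].
  rewrite Et expn1 in H2. have -> : distn x p = 1%N by lia.
  have := mis_le1 (e_a n) x p. rewrite /= ; lra.
rewrite Et in H1 H2.
have [Hrx Hmx] := read_ok (e_a n) 0 x; have [Hrp Hmp] := read_ok (e_a n) 0 p.
have HE : Ex (inexact_lt (e_a n) x p) (fun lt => if mis x p lt then 1 else 0) <= 2 * / pow 2 k.
  rewrite /inexact_lt Ex_bind.
  apply: Rle_trans (_ : Ex (read_val (e_a n) x) (fun rx =>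
     (if (2^k <= distn rx x)%N then 1 else 0) + / pow 2 k) <= _).
    apply: (Ex_le Hrx) => rx _; rewrite Ex_bind.
    apply: Rle_trans (_ : Ex (read_val (e_a n) p) (fun rp =>
     (if (2^k <= distn rx x)%N then 1 else 0) + (if (2^k <= distn rp p)%N then 1 else 0)) <= _).
      apply: (Ex_le Hrp) => rp _; rewrite Ex_ret.
      case E1: (2^k <= distn rx x)%N; case E2: (2^k <= distn rp p)%N; case E3: (mis x p (rx < rp)%N); try lra.
      exfalso; move: E1 E2 E3 H1; rewrite /mis /distn expnS; case: ltnP => ? ; lia.
    rewrite Ex_add Ex_const Hmp; have := (@read_tail n p k Hp); lra.
  rewrite Ex_add Ex_const Hmx; have := (@read_tail n x k Hx); lra.
have HDR : INR (distn x p) < pow 2 k.+2.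
  rewrite -INR_expn2; apply: lt_INR; apply/ltP; exact: H2.
have Hk := pow2_pos k.
have E4 : pow 2 k.+2 = 4 * pow 2 k by rewrite /=; lra.
rewrite E4 in HDR.
have HD0 : 0 <= INR (distn x p) by apply: pos_INR.
apply: Rle_trans (_ : INR (distn x p) * (2 * / pow 2 k) <= _).
  apply: Rmult_le_compat_l => //.
have -> : 8 = (4 * pow 2 k) * (2 * / pow 2 k) by field; lra.
apply: Rmult_le_compat_r; last lra.
have : 0 < / pow 2 k by apply: Rinv_0_lt_compat.
lra.
Qed.

Lemma rsum_map_le (T : eqType) (s : seq T) f g :
  (forall x, x \in s -> f x <= g x) -> rsum (map f s) <= rsum (map g s).
Proof.
elim: s => [|a s IH] H /=; first by rewrite rsum_nil; lra.
rewrite !rsum_cons; have := H a (mem_head _ _).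
have := IH (fun x Hx => H x (@mem_behead _ (a :: s) x Hx)); lra.
Qed.

Lemma rsum_map_add (T : Type) (s : seq T) f g :
  rsum (map (fun x => f x + g x) s) = rsum (map f s) + rsum (map g s).
Proof. elim: s => [|a s IH]; first by rewrite /rsum /=; lra.
rewrite !map_cons !rsum_cons IH; lra. Qed.

Lemma rsum_map_scale (T : Type) (s : seq T) c f :
  rsum (map (fun x => c * f x) s) = c * rsum (map f s).
Proof. elim: s => [|a s IH]; first by rewrite /rsum /=; lra.
rewrite !map_cons !rsum_cons IH; lra. Qed.

Lemma rsum_map_const (T : Type) (s : seq T) c :
  rsum (map (fun _ => c) s) = INR (size s) * c.
Proof. elim: s => [|a s IH]; first by rewrite /rsum /=; lra.
rewrite map_cons rsum_cons IH.
have -> : size (a :: s) = (size s).+1 by []. rewrite S_INR; lra. Qed.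

Lemma rsum_ind (T : Type) (s : seq T) (a : pred T) :
  rsum (map (fun x => if a x then 1 else 0) s) = INR (count a s).
Proof. elim: s => [|x s IH]; first by rewrite /rsum /=; lra.
rewrite map_cons rsum_cons IH.
have -> : count a (x :: s) = (a x + count a s)%N by [].
rewrite INR_addn. case: (a x); [change (INR true) with 1 | change (INR false) with 0]; lra. Qed.

Lemma rsum_map_ge0 (T : eqType) (s : seq T) f :
  (forall x, x \in s -> 0 <= f x) -> 0 <= rsum (map f s).
Proof.
move=> H; have -> : 0 = rsum (map (fun _ => 0) s) by rewrite rsum_map_const; lra.
exact: rsum_map_le.
Qed.

Lemma part_ok e p s : ok (partition_dist e p s) (fun lr => perm_eq (lr.1 ++ lr.2) s)
  /\ mass (partition_dist e p s) = 1.
Proof.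
elim: s => [|x s [IHo IHm]] /=; first by split; [apply: ok_ret|apply: mass_ret].
have [Hi Hmi] := inexact_ok e x p.
split.
- apply: ok_bind Hi _ => lt _; apply: ok_bind IHo _ => [[L R]] /= HLR; apply: ok_ret.
  case: lt => /=; first by rewrite perm_cons.
  by rewrite -cat1s perm_catCA /= perm_cons.
- apply: mass_bind Hi Hmi _ => lt _; apply: mass_bind IHo IHm _ => lr _; exact: mass_ret.
Qed.

Lemma part_sum e p s (hL hR : nat -> R) :
  Ex (partition_dist e p s) (fun lr => rsum (map hL lr.1) + rsum (map hR lr.2)) =
  rsum [seq Ex (inexact_lt e x p) (fun lt => if lt then hL x else hR x) | x <- s].
Proof.
elim: s => [|x s IH] /=; first by rewrite Ex_ret /= !rsum_nil; lra.
have [Hi Hmi] := inexact_ok e x p.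
have [Ho Hm] := part_ok e p s.
rewrite Ex_bind rsum_cons -IH.
have -> : Ex (partition_dist e p s) (fun lr => rsum [seq hL i | i <- lr.1] + rsum [seq hR i | i <- lr.2])
  = Ex (inexact_lt e x p) (fun _ => Ex (partition_dist e p s) (fun lr => rsum [seq hL i | i <- lr.1] + rsum [seq hR i | i <- lr.2])) by rewrite Ex_const Hmi; lra.
rewrite -Ex_add.
apply: (Ex_ext Hi) => lt _.
rewrite Ex_bind.
have -> : (if lt then hL x else hR x) = Ex (partition_dist e p s) (fun _ => if lt then hL x else hR x) by rewrite Ex_const Hm; lra.
rewrite -Ex_add; apply: (Ex_ext Ho) => lr _; rewrite Ex_ret.
case: lt => /=; rewrite !rsum_cons. all: change (fun i => hL i) with hL; change (fun i => hR i) with hR; lra.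
Qed.

Definition gL (p x : nat) : R := if (p <= x)%N then INR (distn x p) else 0.
Definition gR (p x : nat) : R := if (x < p)%N then INR (distn x p) else 0.
Definition Mw (p : nat) (lr : seq nat * seq nat) : R :=
  rsum (map (gL p) lr.1) + rsum (map (gR p) lr.2).

Lemma part_Mw n p s : (p < 2^n)%N -> all (fun x => x < 2^n)%N s -> p \notin s ->
  Ex (partition_dist (e_a n) p s) (Mw p) <= 8 * INR (size s).
Proof.
move=> Hp Hs Hps; rewrite /Mw part_sum.
apply: Rle_trans (_ : rsum (map (fun _ => 8) s) <= _); last by rewrite rsum_map_const; lra.
apply: rsum_map_le => x Hx.
have Hxn : (x < 2^n)%N by move/allP: Hs => /(_ x Hx).
have Hxp : x <> p by move=> E; subst; rewrite Hx in Hps.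
have [Hi _] := inexact_ok (e_a n) x p.
apply: Rle_trans (mis_bound Hxn Hp Hxp); rewrite -Ex_scale.
apply: Req_le; apply: (Ex_ext Hi) => lt _; rewrite /gL /gR /mis.
case: lt; case: ifP => _; lra.
Qed.

Definition Mc (p : nat) (lr : seq nat * seq nat) : nat :=
  (count (fun x => p <= x) lr.1 + count (fun x => x < p) lr.2)%N.

Lemma count_near (s : seq nat) p T : uniq s -> (count (fun x => distn x p <= T) s <= 2 * T + 1)%N.
Proof.
move=> Hu; rewrite -size_filter.
have -> : (2 * T + 1 = size (iota (p - T) (2 * T + 1)))%N by rewrite size_iota.
apply: uniq_leq_size; first exact: filter_uniq.
move=> x; rewrite mem_filter mem_iota /distn => /andP [H _]; lia.
Qed.

Lemma part_Mc n p s : (p < 2^n)%N -> all (fun x => x < 2^n)%N s -> p \notin s -> uniq s ->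
  Ex (partition_dist (e_a n) p s) (fun lr => INR (Mc p lr)) <= 129 + INR (size s) / 8.
Proof.
move=> Hp Hs Hps Hu.
have -> : (fun lr => INR (Mc p lr)) = (fun lr : seq nat * seq nat =>
   rsum (map (fun x => if (p <= x)%N then 1 else 0) lr.1) + rsum (map (fun x => if (x < p)%N then 1 else 0) lr.2)).
  by apply: FunctionalExtensionality.functional_extensionality => lr; rewrite !rsum_ind /Mc INR_addn.
rewrite part_sum.
apply: Rle_trans (_ : rsum (map (fun x => (if (distn x p <= 64)%N then 1 else 0) + / 8) s) <= _).
  apply: rsum_map_le => x Hx.
  have Hxn : (x < 2^n)%N by move/allP: Hs => /(_ x Hx).
  have Hxp : x <> p by move=> E; subst; rewrite Hx in Hps.
  have [Hi _] := inexact_ok (e_a n) x p.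
  have HB := mis_bound Hxn Hp Hxp.
  have H1 := mis_le1 (e_a n) x p.
  have H0 := mis_ge0 (e_a n) x p.
  have -> : Ex (inexact_lt (e_a n) x p) (fun lt => if lt then (if (p <= x)%N then 1 else 0) else (if (x < p)%N then 1 else 0))
     = Ex (inexact_lt (e_a n) x p) (fun lt => if mis x p lt then 1 else 0) by apply: (Ex_ext Hi) => -[] _.
  case: ifP => Hd; first lra.
  have Hd' : 64 < INR (distn x p).
    have -> : 64 = INR 64 by rewrite /=; lra.
    apply: lt_INR; apply/ltP; lia.
  have : 0 < / 8 by lra.
  nra.
rewrite rsum_map_add rsum_ind rsum_map_const.
have := count_near p 64 Hu. move/leP/le_INR. rewrite /=. lra.
Qed.

HB.instance Definition _ := Monoid.isComLaw.Build R 0 Rplus (fun a b c => esym (Rplus_assoc a b c)) Rplus_comm Rplus_0_l.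
Lemma rsum_big (T : Type) (s : seq T) f : rsum (map f s) = \big[Rplus/0]_(x <- s) f x.
Proof. elim: s => [|a s IH]; first by rewrite big_nil. by rewrite big_cons -IH. Qed.
Lemma rsum_perm (T : eqType) (s t : seq T) f : perm_eq s t -> rsum (map f s) = rsum (map f t).
Proof. move=> H; rewrite !rsum_big; exact: perm_big. Qed.

Lemma rsum_map_cat (T : Type) (s t : seq T) f : rsum (map f (s ++ t)) = rsum (map f s) + rsum (map f t).
Proof. by rewrite map_cat rsum_cat. Qed.

Lemma rsum_map_ge0n (s : seq nat) (f : nat -> R) : (forall x, x \in s -> 0 <= f x) -> 0 <= rsum (map f s).
Proof. exact: rsum_map_ge0. Qed.

Definition w (x y : nat) (out : seq nat) : R :=
  INR (distn x y) * (if wrong_order x y out then 1 else 0).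

Definition Dm (s out : seq nat) : R :=
  rsum [seq rsum [seq w x y out | y <- s] | x <- s].

Lemma wo_sym x y out : wrong_order x y out = wrong_order y x out.
Proof.
rewrite /wrong_order; case: (ltngtP x y) => H //. by subst.
Qed.

Lemma w_sym x y out : w x y out = w y x out.
Proof. by rewrite /w wo_sym /distn addnC. Qed.

Lemma w_ge0 x y out : 0 <= w x y out.
Proof. rewrite /w; have := pos_INR (distn x y); have := ind_ge0 (wrong_order x y out); nra. Qed.

Lemma wo_lt x y out : (index x out < index y out)%N -> wrong_order x y out = (y < x)%N.
Proof.
move=> H; rewrite /wrong_order; case: (ltngtP x y) => Hxy.
- by rewrite ltnNge ltnW.
- by [].
- by subst; rewrite ltnn in H.
Qed.

Lemma w_lt x y out : (index x out < index y out)%N -> w x y out = if (y < x)%N then INR (distn x y) else 0.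
Proof. move=> H; rewrite /w wo_lt //; case: ifP => _; lra. Qed.

Lemma if_INR (b : bool) d : (if b then INR d else 0) = INR (if b then d else 0%N).
Proof. by case: b. Qed.

Section Split.
Variables (p : nat) (l r : seq nat).
Hypothesis Hu : uniq (p :: l ++ r).
Let out := l ++ p :: r.

Lemma pl : p \notin l.
Proof. move: Hu => /= /andP [H _]; by move: H; rewrite mem_cat negb_or => /andP []. Qed.
Lemma pr : p \notin r.
Proof. move: Hu => /= /andP [H _]; by move: H; rewrite mem_cat negb_or => /andP []. Qed.
Lemma lr_disj x : x \in r -> x \notin l.
Proof. move: Hu => /= /andP [_ H] Hx; rewrite cat_uniq in H; case/and3P: H => _ H _.
apply/negP => Hl; move/hasP: H; apply; exists x => //. Qed.

Lemma idx_l x : x \in l -> index x out = index x l.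
Proof. by move=> H; rewrite /out index_cat H. Qed.
Lemma idx_p : index p out = size l.
Proof. by rewrite /out index_cat (negbTE pl) /= eqxx addn0. Qed.
Lemma idx_r x : x \in r -> index x out = (size l + (index x r).+1)%N.
Proof.
move=> H; rewrite /out index_cat (negbTE (lr_disj H)) /=.
have : p != x by apply/negP => /eqP E; have := pr; rewrite E H.
by move/negbTE => ->.
Qed.

Lemma w_ll x y : x \in l -> y \in l -> w x y out = w x y l.
Proof. move=> Hx Hy; by rewrite /w /wrong_order !idx_l. Qed.
Lemma w_rr x y : x \in r -> y \in r -> w x y out = w x y r.
Proof. move=> Hx Hy; rewrite /w /wrong_order !idx_r // !ltn_add2l !ltnS //. Qed.
Lemma w_lp x : x \in l -> w x p out <= gL p x.
Proof.
move=> Hx; rewrite w_lt; last by rewrite idx_l // idx_p index_mem.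
rewrite /gL !if_INR; apply: le_INR; apply/leP; rewrite /distn.
repeat (case: ifP => ?); lia.
Qed.
Lemma w_pr y : y \in r -> w p y out <= gR p y.
Proof.
move=> Hy; rewrite w_lt; last by rewrite idx_p idx_r //; lia.
rewrite /gR !if_INR; apply: le_INR; apply/leP; rewrite /distn.
repeat (case: ifP => ?); lia.
Qed.
Lemma w_lr x y : x \in l -> y \in r -> w x y out <= gL p x + gR p y.
Proof.
move=> Hx Hy; rewrite w_lt; last by rewrite idx_l // idx_r //; have H := Hx; rewrite -index_mem in H; apply: (leq_trans H); exact: leq_addr.
rewrite /gL /gR !if_INR -INR_addn; apply: le_INR; apply/leP; rewrite /distn.
repeat (case: ifP => ?); lia.
Qed.
End Split.

Lemma rsum_pair_bound (La Ra : seq nat) (f g : nat -> R) (h : nat -> nat -> R) :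
  (forall x y, x \in La -> y \in Ra -> h x y <= f x + g y) ->
  rsum [seq rsum [seq h x y | y <- Ra] | x <- La] <=
  INR (size Ra) * rsum (map f La) + INR (size La) * rsum (map g Ra).
Proof.
move=> H.
apply: Rle_trans (_ : rsum [seq rsum [seq f x + g y | y <- Ra] | x <- La] <= _).
  apply: rsum_map_le => x Hx; apply: rsum_map_le => y Hy; exact: H.
have -> : [seq rsum [seq f x + g y | y <- Ra] | x <- La] = [seq INR (size Ra) * f x + rsum (map g Ra) | x <- La].
  apply: eq_map => x; rewrite rsum_map_add rsum_map_const; lra.
rewrite rsum_map_add rsum_map_const rsum_map_scale. apply: Req_le; reflexivity.
Qed.

Definition Mw' (p : nat) (La Ra : seq nat) := rsum (map (gL p) La) + rsum (map (gR p) Ra).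

Lemma gL_ge0 p x : 0 <= gL p x.
Proof. rewrite /gL; case: ifP => _; [apply: pos_INR | lra]. Qed.
Lemma gR_ge0 p x : 0 <= gR p x.
Proof. rewrite /gR; case: ifP => _; [apply: pos_INR | lra]. Qed.

Lemma Dm_split (s : seq nat) (p : nat) (La Ra l r : seq nat) :
  uniq s -> perm_eq s (p :: La ++ Ra) -> perm_eq l La -> perm_eq r Ra ->
  Dm s (l ++ p :: r) <= Dm La l + Dm Ra r + 2 * (INR (size s) + 1) * Mw' p La Ra.
Proof.
move=> Hus HS HL HR.
have HS' : perm_eq s (p :: l ++ r).
  apply: perm_trans HS _; rewrite perm_cons perm_sym; exact: perm_cat.
have Hu : uniq (p :: l ++ r) by rewrite -(perm_uniq HS').
set out := l ++ p :: r.
have memL : forall x, (x \in La) = (x \in l) by move=> x; rewrite (perm_mem HL).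
have memR : forall x, (x \in Ra) = (x \in r) by move=> x; rewrite (perm_mem HR).
have E1 : forall x, rsum [seq w x y out | y <- s] = w x p out + rsum [seq w x y out | y <- La] + rsum [seq w x y out | y <- Ra].
  move=> x; rewrite (rsum_perm _ HS) /= rsum_cons rsum_map_cat; lra.
rewrite /Dm (rsum_perm _ HS) /= rsum_cons rsum_map_cat.
rewrite E1.
have Ex1 : forall L0, rsum [seq rsum [seq w x y out | y <- s] | x <- L0] =
   rsum [seq w x p out | x <- L0] + rsum [seq rsum [seq w x y out | y <- La] | x <- L0] + rsum [seq rsum [seq w x y out | y <- Ra] | x <- L0].
  move=> L0; rewrite -!rsum_map_add; congr rsum; apply: eq_map => x; exact: E1.
rewrite !Ex1.
have Hm : 0 <= Mw' p La Ra.
  rewrite /Mw'; have := @rsum_map_ge0n La (gL p) (fun x _ => gL_ge0 p x).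
  have := @rsum_map_ge0n Ra (gR p) (fun x _ => gR_ge0 p x); lra.
have HsL : (size La <= size s)%N by rewrite (perm_size HS) /= size_cat; lia.
have HsR : (size Ra <= size s)%N by rewrite (perm_size HS) /= size_cat; lia.
have HsLR : INR (size La) <= INR (size s) by apply: le_INR; apply/leP.
have HsRR : INR (size Ra) <= INR (size s) by apply: le_INR; apply/leP.
have GL := @rsum_map_ge0n La (gL p) (fun x _ => gL_ge0 p x).
have GR := @rsum_map_ge0n Ra (gR p) (fun x _ => gR_ge0 p x).
have Epp : w p p out = 0 by rewrite /w /distn subnn /=; lra.
have EpL : rsum [seq w p y out | y <- La] <= rsum (map (gL p) La).
  apply: rsum_map_le => y Hy; rewrite w_sym; apply: w_lp => //; by rewrite -memL.
have EpR : rsum [seq w p y out | y <- Ra] <= rsum (map (gR p) Ra).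
  apply: rsum_map_le => y Hy; apply: w_pr => //; by rewrite -memR.
have ELp : rsum [seq w x p out | x <- La] <= rsum (map (gL p) La).
  apply: rsum_map_le => y Hy; apply: w_lp => //; by rewrite -memL.
have ERp : rsum [seq w x p out | x <- Ra] <= rsum (map (gR p) Ra).
  apply: rsum_map_le => y Hy; rewrite w_sym; apply: w_pr => //; by rewrite -memR.
have ELL : rsum [seq rsum [seq w x y out | y <- La] | x <- La] = rsum [seq rsum [seq w x y l | y <- La] | x <- La].
  congr rsum; apply/eq_in_map => x Hx; congr rsum; apply/eq_in_map => y Hy.
  apply: w_ll; by rewrite -memL.
have ERR : rsum [seq rsum [seq w x y out | y <- Ra] | x <- Ra] = rsum [seq rsum [seq w x y r | y <- Ra] | x <- Ra].
  congr rsum; apply/eq_in_map => x Hx; congr rsum; apply/eq_in_map => y Hy.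
  apply: (w_rr Hu); by rewrite -memR.
have ELR : rsum [seq rsum [seq w x y out | y <- Ra] | x <- La] <=
   INR (size Ra) * rsum (map (gL p) La) + INR (size La) * rsum (map (gR p) Ra).
  apply: rsum_pair_bound => x y Hx Hy; apply: (w_lr Hu); by rewrite -?memL -?memR.
have ERL : rsum [seq rsum [seq w x y out | y <- La] | x <- Ra] <=
   INR (size La) * rsum (map (gR p) Ra) + INR (size Ra) * rsum (map (gL p) La).
  apply: rsum_pair_bound => x y Hx Hy; rewrite w_sym Rplus_comm; apply: (w_lr Hu); by rewrite -?memL -?memR.
simpl in ELR, ERL.
rewrite ELL ERR Epp /Mw'. 
nra.
Qed.

Lemma Ex_unif (T : Type) (s : seq T) f : Ex (dunif s) f = / INR (size s) * rsum (map f s).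
Proof.
rewrite /dunif /Ex -map_comp /= -rsum_map_scale; congr rsum.
Qed.

Lemma ok_map_const (s : seq nat) (c : R) (P : nat -> Prop) :
  0 <= c -> (forall a, a \in s -> P a) -> ok [seq (c, a) | a <- s] P.
Proof.
move=> Hc; elim: s => [|a s IH] H /=; first by constructor.
constructor; first by split => //; apply: H; rewrite mem_head.
apply: IH => b Hb; apply: H; by rewrite inE Hb orbT.
Qed.

Lemma unif_ok (m : nat) : (0 < m)%N -> ok (dunif (iota 0 m)) (fun i => (i < m)%N).
Proof.
move=> Hm; apply: ok_map_const.
  apply: Rlt_le; apply: Rinv_0_lt_compat; apply: lt_0_INR; rewrite size_iota; by apply/ltP.
by move=> a; rewrite mem_iota.
Qed.

Lemma unif_mass (m : nat) : (0 < m)%N -> mass (dunif (iota 0 m)) = 1.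
Proof.
move=> Hm; rewrite /mass Ex_unif rsum_map_const size_iota.
have : 0 < INR m by apply: lt_0_INR; apply/ltP.
move=> H; field; lra.
Qed.

Lemma perm_pivot (s : seq nat) i : (i < size s)%N ->
  perm_eq s (nth 0%N s i :: (take i s ++ drop i.+1 s)).
Proof.
move=> Hi; rewrite -{1}(cat_take_drop i s) (drop_nth 0%N Hi).
by rewrite -cat1s perm_catCA.
Qed.

Lemma qs_ok e k s : ok (qs_fuel e k s) (fun out => perm_eq out s) /\ mass (qs_fuel e k s) = 1.
Proof.
elim: k s => [|k IH] s /=; first by split; [apply: ok_ret|apply: mass_ret].
case: s => [|x s']; first by split; [apply: ok_ret|apply: mass_ret].
set s := x :: s'.
have Hs : (0 < size s)%N by [].
split.
- apply: ok_bind (unif_ok Hs) _ => i Hi.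
  have [Ho _] := part_ok e (nth 0%N s i) (take i s ++ drop i.+1 s).
  apply: ok_bind Ho _ => [[L R]] /= HLR.
  apply: ok_bind (proj1 (IH L)) _ => l Hl.
  apply: ok_bind (proj1 (IH R)) _ => r Hr.
  apply: ok_ret.
  rewrite perm_sym; apply: perm_trans (perm_pivot Hi) _.
  rewrite perm_sym perm_catC /= perm_cons perm_catC.
  apply: perm_trans HLR; exact: perm_cat.
- apply: mass_bind (unif_ok Hs) (unif_mass Hs) _ => i Hi.
  have [Ho Hm] := part_ok e (nth 0%N s i) (take i s ++ drop i.+1 s).
  apply: mass_bind Ho Hm _ => [[L R]] /= HLR.
  apply: mass_bind (proj1 (IH L)) (proj2 (IH L)) _ => l Hl.
  apply: mass_bind (proj1 (IH R)) (proj2 (IH R)) _ => r Hr.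
  exact: mass_ret.
Qed.

Definition rk (s : seq nat) (x : nat) : nat := count (fun y => y < x)%N s.

Lemma rk_lt (s : seq nat) x y : x \in s -> (x < y)%N -> (rk s x < rk s y)%N.
Proof.
move=> Hx Hxy; rewrite /rk.
have Hsub : forall t, (count (fun z => z < x)%N t <= count (fun z => z < y)%N t)%N.
  move=> t; apply: sub_count => z /=; lia.
elim: s Hx => [|a s IH] //=; rewrite inE => /orP [/eqP Ea|Hx].
- rewrite -Ea ltnn Hxy /=. have := Hsub s. lia.
- have := IH Hx. case Hax: (a < x)%N.
  + have -> : (a < y)%N by lia. simpl. lia.
  + case: (a < y)%N => /=; lia.
Qed.

Lemma rk_size (s : seq nat) x : x \in s -> (rk s x < size s)%N.
Proof.
move=> Hx; rewrite /rk -(count_predC (fun y => y < x)%N s).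
have : (0 < count (predC (fun y => y < x)%N) s)%N by rewrite -has_count; apply/hasP; exists x => //=; rewrite ltnn.
lia.
Qed.

Lemma rk_perm (s : seq nat) : uniq s -> perm_eq (map (rk s) s) (iota 0 (size s)).
Proof.
move=> Hu.
have Hmu : uniq (map (rk s) s).
  rewrite map_inj_in_uniq // => x y Hx Hy E.
  case: (ltngtP x y) => // H.
  - have := rk_lt Hx H; lia.
  - have := rk_lt Hy H; lia.
have Hsub : {subset map (rk s) s <= iota 0 (size s)}.
  move=> z /mapP [x Hx ->]; rewrite mem_iota add0n leq0n /=; exact: rk_size.
have Hsz : (size (iota 0 (size s)) <= size (map (rk s) s))%N by rewrite size_map size_iota.
have [_ Heq] := uniq_min_size Hmu Hsub Hsz.
apply: uniq_perm => //; exact: iota_uniq.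
Qed.

Lemma sumn_map_add1 (s : seq nat) f : sumn [seq (f r + 1)%N | r <- s] = (sumn (map f s) + size s)%N.
Proof. elim: s => [|a s IH] //=; rewrite IH; lia. Qed.

Definition hmax (m r : nat) : nat := maxn r (m.-1 - r).

Lemma sum_max_step m : sumn [seq hmax m.+2 r | r <- iota 0 m.+2] = (sumn [seq hmax m r | r <- iota 0 m] + 3 * m + 2)%N.
Proof.
have E : iota 0 m.+2 = 0%N :: (iota 1 m ++ [:: m.+1]).
  have -> : m.+2 = (1 + (m + 1))%N by lia.
  by rewrite !iotaD /= add1n addn1.
rewrite E /= map_cat sumn_cat /=.
have -> : iota 1 m = [seq 1 + i | i <- iota 0 m]%N by rewrite -iotaDl.
rewrite -map_comp.
have -> : [seq ([eta hmax m.+2] \o [eta addn 1]) i | i <- iota 0 m] = [seq (hmax m r + 1)%N | r <- iota 0 m].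
  apply/eq_in_map => r; rewrite mem_iota => /andP [_ H]; rewrite /hmax /=; lia.
rewrite sumn_map_add1 size_iota /hmax /=; lia.
Qed.

Lemma sum_max m : (4 * sumn [seq hmax m r | r <- iota 0 m] <= 3 * (m * m))%N.
Proof.
have : forall m, (4 * sumn [seq hmax m r | r <- iota 0 m] <= 3 * (m * m))%N /\
                 (4 * sumn [seq hmax m.+1 r | r <- iota 0 m.+1] <= 3 * (m.+1 * m.+1))%N.
  elim => [|k [IH1 IH2]]; first by split.
  split => //; rewrite sum_max_step; nia.
by move=> H; case: (H m).
Qed.

Lemma rsum_INR (s : seq nat) (f : nat -> nat) : rsum (map (fun x => INR (f x)) s) = INR (sumn (map f s)).
Proof. elim: s => [|a s IH] //=; rewrite rsum_cons IH INR_addn //. Qed.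

Lemma part_sizes (p : nat) (s L R : seq nat) : perm_eq (L ++ R) s ->
  (maxn (size L) (size R) <= maxn (count (fun x => x < p)%N s) (size s - count (fun x => x < p)%N s) + Mc p (L, R))%N.
Proof.
move=> H.
have Hc : count (fun x => x < p)%N s = (count (fun x => x < p)%N L + count (fun x => x < p)%N R)%N.
  by rewrite -count_cat; apply/esym/(permP H).
have Hs : size s = (size L + size R)%N by rewrite -(perm_size H) size_cat.
have HL := count_predC (fun x => x < p)%N L.
have HR := count_predC (fun x => x < p)%N R.
have EL : count (predC (fun x => x < p)%N) L = count (fun x => p <= x)%N L by apply: eq_count => x /=; rewrite -leqNgt.
have ER : count (predC (fun x => x < p)%N) R = count (fun x => p <= x)%N R by apply: eq_count => x /=; rewrite -leqNgt.
rewrite /Mc /=; lia.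
Qed.

Definition Kc : R := 131072.
Definition F (m : nat) : R := Kc * (INR m * INR m) * ln (INR m).

Lemma ln_INR_ge0 m : (0 < m)%N -> 0 <= ln (INR m).
Proof.
move=> Hm; rewrite -ln_1; case: (m =P 1%N) => [->|Hne]; first by rewrite /=; lra.
apply: Rlt_le; apply: ln_increasing; first lra.
have -> : 1 = INR 1 by []. apply: lt_INR; apply/ltP; lia.
Qed.

Lemma ln_INR_le a m : (0 < a)%N -> (a <= m)%N -> ln (INR a) <= ln (INR m).
Proof.
move=> Ha Ham; case: (a =P m) => [->|Hne]; first lra.
apply: Rlt_le; apply: ln_increasing; first by apply: lt_0_INR; apply/ltP.
apply: lt_INR; apply/ltP; lia.
Qed.

Lemma F_le a m : (a <= m)%N -> F a <= Kc * ln (INR m) * (INR a * INR a).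
Proof.
move=> Ham; rewrite /F; case: (posnP a) => [->|Ha]; first by rewrite /=; lra.
have := ln_INR_le Ha Ham; have : 0 <= INR a * INR a by nra.
rewrite /Kc; nra.
Qed.

Lemma F_pair a b m : (a + b <= m)%N ->
  F a + F b <= Kc * ln (INR m) * INR m * INR (maxn a b).
Proof.
move=> H.
case: (posnP m) => [Hm0|Hm].
  have -> : a = 0%N by lia. have -> : b = 0%N by lia. rewrite /F /=; lra.
have H1 : F a <= Kc * ln (INR m) * (INR a * INR a) by apply: F_le; lia.
have H2 : F b <= Kc * ln (INR m) * (INR b * INR b) by apply: F_le; lia.
have Hln := ln_INR_ge0 Hm.
have Hn : (a * a + b * b <= m * maxn a b)%N.
  have : (a * a + b * b <= maxn a b * (a + b))%N.
    case: (leqP a b) => Hab; nia.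
  move=> Hx; apply: leq_trans Hx _; rewrite mulnC; apply: leq_mul => //.
have HR : INR a * INR a + INR b * INR b <= INR m * INR (maxn a b).
  rewrite -!INR_muln -INR_addn; apply: le_INR; apply/leP; exact: Hn.
rewrite /Kc in H1 H2 *; nra.
Qed.

Lemma inner_bound n k (s : seq nat) (p : nat) (rest : seq nat) :
  (forall t, uniq t -> all (fun x => x < 2^n)%N t -> (size t <= k)%N ->
     Ex (qs_fuel (e_a n) k t) (Dm t) <= F (size t)) ->
  uniq s -> perm_eq s (p :: rest) -> (size s <= k.+1)%N ->
  all (fun x => x < 2^n)%N s ->
  Ex (partition_dist (e_a n) p rest) (fun lr => Ex (qs_fuel (e_a n) k lr.1)
      (fun l => Ex (qs_fuel (e_a n) k lr.2) (fun r => Dm s (l ++ p :: r))))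
  <= Ex (partition_dist (e_a n) p rest) (fun lr =>
       Kc * ln (INR (size s)) * INR (size s) * INR (maxn (size lr.1) (size lr.2))
       + 2 * (INR (size s) + 1) * Mw p lr).
Proof.
move=> IH Hu Hperm Hk Ha.
have [Ho Hm] := part_ok (e_a n) p rest.
apply: (Ex_le Ho) => -[L R] /= HLR.
have Hur : uniq (p :: rest) by rewrite -(perm_uniq Hperm).
have HuLR : uniq (L ++ R) by rewrite (perm_uniq HLR); case/andP: Hur.
have HuL : uniq L by move: HuLR; rewrite cat_uniq => /and3P [].
have HuR : uniq R by move: HuLR; rewrite cat_uniq => /and3P [].
have Hsz : size s = (size L + size R).+1 by rewrite (perm_size Hperm) /= -(perm_size HLR) size_cat.
have Hmem : forall x, (x \in L) || (x \in R) -> x \in s.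
  move=> x Hx; rewrite (perm_mem Hperm) inE -(perm_mem HLR) mem_cat Hx orbT //.
have HaL : all (fun x => x < 2^n)%N L.
  apply/allP => y Hy; have Hy' : y \in s by apply: Hmem; rewrite Hy.
  exact: (allP Ha y Hy').
have HaR : all (fun x => x < 2^n)%N R.
  apply/allP => y Hy; have Hy' : y \in s by apply: Hmem; rewrite Hy orbT.
  exact: (allP Ha y Hy').
have HS : perm_eq s (p :: L ++ R).
  apply: perm_trans Hperm _; rewrite perm_cons perm_sym //.
have [HoL HmL] := qs_ok (e_a n) k L.
have [HoR HmR] := qs_ok (e_a n) k R.
set c := 2 * (INR (size s) + 1) * Mw' p L R.
apply: Rle_trans (_ : Ex (qs_fuel (e_a n) k L) (fun l => Ex (qs_fuel (e_a n) k R)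
     (fun r => Dm L l + Dm R r + c)) <= _).
  apply: (Ex_le HoL) => l Hl; apply: (Ex_le HoR) => r Hr; apply: Dm_split => //.
have E1 : forall l, Ex (qs_fuel (e_a n) k R) (fun r => Dm L l + Dm R r + c)
     = Dm L l + Ex (qs_fuel (e_a n) k R) (Dm R) + c.
  move=> l.
  rewrite (Ex_add (qs_fuel (e_a n) k R) (fun r => Dm L l + Dm R r) (fun _ => c)).
  rewrite (Ex_add (qs_fuel (e_a n) k R) (fun _ => Dm L l) (Dm R)).
  rewrite !Ex_const HmR; lra.
have E2 : Ex (qs_fuel (e_a n) k L) (fun l => Ex (qs_fuel (e_a n) k R) (fun r => Dm L l + Dm R r + c))
   = Ex (qs_fuel (e_a n) k L) (Dm L) + Ex (qs_fuel (e_a n) k R) (Dm R) + c.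
  rewrite (Ex_ext (g := fun l => Dm L l + Ex (qs_fuel (e_a n) k R) (Dm R) + c) HoL); last by move=> l _; exact: E1.
  rewrite (Ex_add (qs_fuel (e_a n) k L) (fun l => Dm L l + Ex (qs_fuel (e_a n) k R) (Dm R)) (fun _ => c)).
  rewrite (Ex_add (qs_fuel (e_a n) k L) (Dm L) (fun _ => Ex (qs_fuel (e_a n) k R) (Dm R))).
  rewrite !Ex_const HmL; lra.
rewrite E2.
have HkL : (size L <= k)%N by rewrite Hsz in Hk; lia.
have HkR : (size R <= k)%N by rewrite Hsz in Hk; lia.
have HLRs : (size L + size R <= size s)%N by rewrite Hsz; lia.
have IL := IH L HuL HaL HkL.
have IR := IH R HuR HaR HkR.
have FP := @F_pair (size L) (size R) (size s) HLRs.
rewrite /c /Mw /Mw' /=.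
apply: Rplus_le_compat; last by apply: Req_le; reflexivity.
exact: Rle_trans (Rplus_le_compat _ _ _ _ IL IR) FP.
Qed.

Lemma Ex_bind3 (A B C D : Type) (d : dist A) (q1 : A -> dist B) (q2 : A -> dist C)
  (h : A -> B -> C -> D) f :
  Ex (dbind d (fun lr => dbind (q1 lr) (fun l => dbind (q2 lr) (fun r => dret (h lr l r))))) f =
  Ex d (fun lr => Ex (q1 lr) (fun l => Ex (q2 lr) (fun r => f (h lr l r)))).
Proof.
rewrite Ex_bind; congr Ex; apply: FunctionalExtensionality.functional_extensionality => lr.
rewrite Ex_bind; congr Ex; apply: FunctionalExtensionality.functional_extensionality => l.
rewrite Ex_bind; congr Ex; apply: FunctionalExtensionality.functional_extensionality => r.
by rewrite Ex_ret.
Qed.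

Lemma per_i n k (s : seq nat) i :
  (forall t, uniq t -> all (fun x => x < 2^n)%N t -> (size t <= k)%N ->
     Ex (qs_fuel (e_a n) k t) (Dm t) <= F (size t)) ->
  uniq s -> (size s <= k.+1)%N -> all (fun x => x < 2^n)%N s -> (i < size s)%N ->
  let p := nth 0%N s i in let rest := take i s ++ drop i.+1 s in
  Ex (dbind (partition_dist (e_a n) p rest) (fun lr =>
        dbind (qs_fuel (e_a n) k lr.1) (fun l =>
        dbind (qs_fuel (e_a n) k lr.2) (fun r => dret (l ++ p :: r))))) (Dm s)
  <= Kc * ln (INR (size s)) * INR (size s) *
       Ex (partition_dist (e_a n) p rest) (fun lr => INR (maxn (size lr.1) (size lr.2)))
     + 16 * (INR (size s) + 1) * (INR (size s) - 1).
Proof.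
move=> IH Hu Hk Ha Hi p rest.
rewrite Ex_bind3.
have Hperm := perm_pivot Hi.
apply: Rle_trans (inner_bound IH Hu Hperm Hk Ha) _.
have [Ho Hm] := part_ok (e_a n) p rest.
rewrite (Ex_add _ (fun lr => Kc * ln (INR (size s)) * INR (size s) * INR (maxn (size lr.1) (size lr.2)))
                  (fun lr => 2 * (INR (size s) + 1) * Mw p lr)).
rewrite (Ex_scale _ (Kc * ln (INR (size s)) * INR (size s))).
rewrite (Ex_scale _ (2 * (INR (size s) + 1))).
have Hur : uniq (p :: rest) by rewrite -(perm_uniq Hperm).
have Hp : (p < 2^n)%N by apply: (allP Ha); rewrite /p mem_nth.
have Har : all (fun x => x < 2^n)%N rest.
  apply/allP => y Hy; apply: (allP Ha); rewrite (perm_mem Hperm) inE Hy orbT //.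
have Hpr : p \notin rest by case/andP: Hur.
have HM := part_Mw Hp Har Hpr.
have Hsz : size s = (size rest).+1 by rewrite (perm_size Hperm).
have HR : INR (size rest) = INR (size s) - 1 by rewrite Hsz S_INR; lra.
rewrite HR in HM.
have H0 : 0 <= INR (size s) by apply: pos_INR.
apply: Rplus_le_compat_l.
have -> : 16 * (INR (size s) + 1) * (INR (size s) - 1) = 2 * (INR (size s) + 1) * (8 * (INR (size s) - 1)) by ring.
apply: Rmult_le_compat_l; first lra.
exact: HM.
Qed.

Lemma maxn_small e p (rest : seq nat) :
  Ex (partition_dist e p rest) (fun lr => INR (maxn (size lr.1) (size lr.2))) <= INR (size rest).
Proof.
have [Ho Hm] := part_ok e p rest.
apply: (Ex_le_const Ho Hm) => -[L R] /= HLR.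
apply: le_INR; apply/leP; rewrite -(perm_size HLR) size_cat geq_max leq_addr leq_addl. done.
Qed.

Lemma maxn_large n p (rest : seq nat) : (p < 2^n)%N -> all (fun x => x < 2^n)%N rest ->
  p \notin rest -> uniq rest ->
  Ex (partition_dist (e_a n) p rest) (fun lr => INR (maxn (size lr.1) (size lr.2)))
  <= INR (maxn (count (fun x => x < p)%N rest) (size rest - count (fun x => x < p)%N rest))
     + 129 + INR (size rest) / 8.
Proof.
move=> Hp Ha Hpr Hu.
have [Ho Hm] := part_ok (e_a n) p rest.
set c := INR (maxn (count (fun x => x < p)%N rest) (size rest - count (fun x => x < p)%N rest)).
apply: Rle_trans (_ : Ex (partition_dist (e_a n) p rest) (fun lr => c + INR (Mc p lr)) <= _).
  apply: (Ex_le Ho) => -[L R] /= HLR; rewrite /c -INR_addn; apply: le_INR; apply/leP.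
  exact: part_sizes.
rewrite (Ex_add _ (fun _ => c) (fun lr => INR (Mc p lr))) Ex_const Hm.
have := part_Mc Hp Ha Hpr Hu. lra.
Qed.

Lemma Ex_affine A (d : dist A) c1 c2 g : mass d = 1 ->
  Ex d (fun a => c1 * g a + c2) = c1 * Ex d g + c2.
Proof.
move=> Hm; rewrite (Ex_add d (fun a => c1 * g a) (fun _ => c2)) Ex_scale Ex_const Hm; lra.
Qed.

Lemma sum_hmax_R m : rsum (map (fun r => INR (hmax m r)) (iota 0 m)) <= 3 / 4 * (INR m * INR m).
Proof.
rewrite rsum_INR.
have H := sum_max m.
have : INR (4 * sumn [seq hmax m r | r <- iota 0 m]) <= INR (3 * (m * m)).
  apply: le_INR; apply/leP; exact: H.
rewrite !INR_muln (_ : INR 4 = 4); last by simpl; ring. rewrite (_ : INR 3 = 3); last by simpl; ring. move=> H0; change (map (fun r => hmax m r) (iota 0 m)) with (map (hmax m) (iota 0 m)) in H0; lra.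
Qed.

Lemma map_nth_iota_gen (f : nat -> R) (s : seq nat) :
  [seq f (nth 0%N s i) | i <- iota 0 (size s)] = map f s.
Proof. by rewrite -{3}(mkseq_nth 0%N s) /mkseq -map_comp. Qed.

Lemma avg_rank (s : seq nat) : uniq s -> (0 < size s)%N ->
  Ex (dunif (iota 0 (size s))) (fun i => INR (hmax (size s) (rk s (nth 0%N s i))))
  <= 3 / 4 * INR (size s).
Proof.
move=> Hu Hs.
rewrite Ex_unif size_iota.
have E : [seq INR (hmax (size s) (rk s (nth 0%N s i))) | i <- iota 0 (size s)]
       = [seq INR (hmax (size s) r) | r <- map (rk s) s].
  by rewrite -map_comp (map_nth_iota_gen (fun x => INR (hmax (size s) (rk s x))) s).
rewrite E.
rewrite (rsum_perm _ (rk_perm Hu)).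
have H := sum_hmax_R (size s).
have HM : 0 < INR (size s) by apply: lt_0_INR; apply/ltP.
apply: Rle_trans (_ : / INR (size s) * (3 / 4 * (INR (size s) * INR (size s))) <= _).
  apply: Rmult_le_compat_l; last exact: H.
  apply: Rlt_le; exact: Rinv_0_lt_compat.
apply: Req_le; field; lra.
Qed.

Lemma count_lt_cons (p : nat) (rest : seq nat) :
  count (fun x => x < p)%N (p :: rest) = count (fun x => x < p)%N rest.
Proof. by rewrite /= ltnn. Qed.

Lemma F0 : F 0 = 0.
Proof. rewrite /F /=; ring. Qed.

Lemma qs_main n k : forall s, uniq s -> all (fun x => x < 2^n)%N s -> (size s <= k)%N ->
  Ex (qs_fuel (e_a n) k s) (Dm s) <= F (size s).
Proof.
elim: k => [|k IH] s Hu Ha Hk.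
  have -> : s = [::] by case: s Hk Hu Ha.
  by rewrite /= Ex_ret /Dm /= rsum_nil F0; lra.
case: s Hu Ha Hk => [|x s'] Hu Ha Hk.
  by rewrite /= Ex_ret /Dm /= rsum_nil F0; lra.
set s := x :: s'.
have Eq : qs_fuel (e_a n) k.+1 s = dbind (dunif (iota 0 (size s))) (fun i =>
    dbind (partition_dist (e_a n) (nth 0%N s i) (take i s ++ drop i.+1 s)) (fun lr =>
        dbind (qs_fuel (e_a n) k lr.1) (fun l =>
        dbind (qs_fuel (e_a n) k lr.2) (fun r => dret (l ++ nth 0%N s i :: r))))) by [].
rewrite Eq Ex_bind.
have Hm : (0 < size s)%N by [].
set m := size s.
have HM1 : 1 <= INR m by have -> : 1 = INR 1 by []; apply: le_INR; apply/leP.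
have HLm := ln_INR_ge0 Hm.
have Hc : 0 <= Kc * ln (INR m) * INR m by apply: Rmult_le_pos; [apply: Rmult_le_pos; [rewrite /Kc; lra|exact: HLm]|lra].
case: (leqP m 2064) => Hsmall.
- apply: (Ex_le_const (unif_ok Hm) (unif_mass Hm)) => i Hi.
  apply: Rle_trans (per_i IH Hu Hk Ha Hi) _.
  have Hperm := perm_pivot Hi.
  have Hsz : size s = (size (take i s ++ drop i.+1 s)).+1 by rewrite (perm_size Hperm).
  have H1 := maxn_small (e_a n) (nth 0%N s i) (take i s ++ drop i.+1 s).
  have HR : INR (size (take i s ++ drop i.+1 s)) = INR m - 1 by rewrite /m Hsz S_INR; lra.
  rewrite HR in H1.
  apply: Rle_trans (_ : Kc * ln (INR m) * INR m * (INR m - 1) + 16 * (INR m + 1) * (INR m - 1) <= _).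
    apply: Rplus_le_compat_r; exact: Rmult_le_compat_l Hc H1.
  rewrite /F.
  case: (m =P 1%N) => [->|Hne].
    rewrite /= ln_1; nra.
  have HM2 : 2 <= INR m by have -> : 2 = INR 2 by []; apply: le_INR; apply/leP; lia.
  have HM3 : INR m <= 2064.
    have : INR m <= INR 2064 by apply: le_INR; apply/leP; lia.
    by rewrite (INR_IZR_INZ 2064).

  have Hl2 : / 2 < ln (INR m).
    apply: Rlt_le_trans ln_lt_2 _.
    case: (Req_dec (INR m) 2) => [->|E]; first lra.
    apply: Rlt_le; apply: ln_increasing; lra.
  rewrite /Kc in Hc *; nra.
- apply: Rle_trans (_ : Ex (dunif (iota 0 m)) (fun i => Kc * ln (INR m) * INR m * INR (hmax m (rk s (nth 0%N s i)))
       + (Kc * ln (INR m) * INR m * (129 + (INR m - 1) / 8) + 16 * (INR m + 1) * (INR m - 1))) <= _).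
    apply: (Ex_le (unif_ok Hm)) => i Hi.
    apply: Rle_trans (per_i IH Hu Hk Ha Hi) _.
    have Hperm := perm_pivot Hi.
    set p := nth 0%N s i. set rest := take i s ++ drop i.+1 s.
    have Hsz : size s = (size rest).+1 by rewrite (perm_size Hperm).
    have Hur : uniq (p :: rest) by rewrite -(perm_uniq Hperm).
    have Hp : (p < 2^n)%N by apply: (allP Ha); rewrite /p mem_nth.
    have Har : all (fun x => x < 2^n)%N rest.
      apply/allP => y Hy; apply: (allP Ha); rewrite (perm_mem Hperm) inE Hy orbT //.
    have Hpr : p \notin rest by case/andP: Hur.
    have Hur' : uniq rest by case/andP: Hur.
    have H1 := maxn_large Hp Har Hpr Hur'.
    have Heq : maxn (count (fun x => x < p)%N rest) (size rest - count (fun x => x < p)%N rest) = hmax m (rk s p).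
      rewrite /hmax /rk (permP Hperm) count_lt_cons /m Hsz //.
    have HR : INR (size rest) = INR m - 1 by rewrite /m Hsz S_INR; lra.
    rewrite Heq HR in H1.
    have := Rmult_le_compat_l _ _ _ Hc H1. rewrite -/s -/m. lra.
  rewrite (Ex_affine (Kc * ln (INR m) * INR m) (Kc * ln (INR m) * INR m * (129 + (INR m - 1) / 8) + 16 * (INR m + 1) * (INR m - 1))
             (fun i => INR (hmax m (rk s (nth 0%N s i)))) (unif_mass Hm)).
  have HA := avg_rank Hu Hm. rewrite -/s -/m in HA.
  have H := Rmult_le_compat_l _ _ _ Hc HA.
  rewrite /F.
  have HM2 : 2064 < INR m.
    have : INR 2064 < INR m by apply: lt_INR; apply/ltP; lia.
    by rewrite (INR_IZR_INZ 2064).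
  have Hl2 : / 2 < ln (INR m).
    apply: Rlt_le_trans ln_lt_2 _.
    apply: Rlt_le; apply: ln_increasing; lra.
  have HMM : 0 <= INR m * INR m by nra.
  have HQ : 65536 * (INR m * INR m) <= 131072 * ln (INR m) * (INR m * INR m).
    apply: Rmult_le_compat_r; [exact: HMM|lra].
  have HPQ : Kc * ln (INR m) * INR m * 2064 <= Kc * ln (INR m) * INR m * INR m.
    apply: Rmult_le_compat_l; [exact: Hc|lra].
  rewrite /Kc in Hc H HPQ *.
  rewrite -/m. nra.
Qed.

Lemma rsum_filter_le (T : Type) (s : seq T) (P : pred T) f :
  (forall x, 0 <= f x) -> rsum (map f (filter P s)) <= rsum (map f s).
Proof.
move=> H; elim: s => [|a s IH] /=; first lra.
have := H a; case: (P a); rewrite /= !rsum_cons; lra.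
Qed.

Lemma rsum_allpairs (s t : seq nat) (g : nat * nat -> R) :
  rsum (map g [seq (a, b) | a <- s, b <- t]) = rsum [seq rsum [seq g (a, b) | b <- t] | a <- s].
Proof.
elim: s => [|a s IH]; first by [].
by rewrite allpairs_cons map_cat rsum_cat IH map_cons rsum_cons -map_comp.
Qed.

Lemma Rabs_INR_distn x y : Rabs (INR x - INR y) = INR (distn x y).
Proof.
rewrite /distn; case: (leqP x y) => H.
- have -> : (x - y)%N = 0%N by lia.
  rewrite add0n minus_INR; last by apply/leP.
  rewrite Rabs_left1; [lra|]. have : INR x <= INR y by apply: le_INR; apply/leP. lra.
- have -> : (y - x)%N = 0%N by lia.
  rewrite addn0 minus_INR; last by apply/leP; lia.
  rewrite Rabs_right; [lra|]. have : INR y <= INR x by apply: le_INR; apply/leP; lia. lra.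
Qed.

Lemma Ex_rsum A (d : dist A) (s : seq nat) (f : nat -> A -> R) :
  Ex d (fun out => rsum (map (fun y => f y out) s)) = rsum (map (fun y => Ex d (f y)) s).
Proof.
elim: s => [|a s IH] /=.
  have -> : (fun _ : A => rsum [::]) = (fun _ => 0) by [].
  rewrite Ex_const rsum_nil; lra.
rewrite rsum_cons -IH.
rewrite (Ex_add d (f a) (fun out => rsum [seq f y out | y <- s])).
by [].
Qed.

Lemma map_nth_iota_gen2 (A : Type) (f : nat -> A) (s : seq nat) :
  [seq f (nth 0%N s i) | i <- iota 0 (size s)] = map f s.
Proof. by rewrite -{3}(mkseq_nth 0%N s) /mkseq -map_comp. Qed.

Theorem lemma4 :
  exists (K : R) (N0 : nat),
    forall (n : nat) (C : seq nat),
      uniq C ->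
      all (fun x => (x < expn 2 n)%N) C ->
      (N0 <= size C)%N ->
      Rle (wkt C (e_a n)) (Rmult K (Rmult (pow (INR (size C)) 2) (ln (INR (size C))))).
Proof.
exists Kc, 0%N => n C Hu Ha _.
rewrite /wkt.
set d := quicksort (e_a n) C.
apply: Rle_trans (rsum_filter_le _ _ _) _.
  move=> ab; apply: Rmult_le_pos; first exact: Rabs_pos.
  rewrite dprob_Ex. have [Ho _] := qs_ok (e_a n) (size C) C.
  apply: (Ex_ge0 Ho) => out _; exact: ind_ge0.
rewrite rsum_allpairs /=.
have E : forall a b, Rabs (INR (nth 0%N C a) - INR (nth 0%N C b)) * dprob d (wrong_order (nth 0%N C a) (nth 0%N C b))
   = Ex d (w (nth 0%N C a) (nth 0%N C b)).
  move=> a b; rewrite dprob_Ex Rabs_INR_distn -Ex_scale //.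
have -> : [seq rsum [seq Rabs (INR (nth 0%N C a) - INR (nth 0%N C b)) * dprob d (wrong_order (nth 0%N C a) (nth 0%N C b)) | b <- iota 0 (size C)] | a <- iota 0 (size C)]
   = [seq rsum [seq Ex d (w x y) | y <- C] | x <- C].
  rewrite -(map_nth_iota_gen2 (fun x => rsum [seq Ex d (w x y) | y <- C]) C).
  apply/eq_map => a; congr rsum.
  rewrite -(map_nth_iota_gen2 (fun y => Ex d (w (nth 0%N C a) y)) C).
  apply/eq_map => b; exact: E.
have -> : [seq rsum [seq Ex d (w x y) | y <- C] | x <- C] = [seq Ex d (fun out => rsum [seq w x y out | y <- C]) | x <- C].
  apply/eq_map => x; by rewrite (Ex_rsum d C (fun y => w x y)).
rewrite -(Ex_rsum d C (fun x out => rsum [seq w x y out | y <- C])).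
have H := @qs_main n (size C) C Hu Ha (leqnn _).

apply: Rle_trans H _.
rewrite /F /=; lra.
Qed.
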